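(* Let $H_1,H_2$ be Hermitian matrices with $H_1=D_1^\dagger D_1$ for some matrix $D_1$, and suppose there are constants $\widetilde C_1,\widetilde C_2\ge0$ such that for every vector $\vec v$: $\|[H_1,H_2]\vec v\|\le\widetilde C_1(\|D_1\vec v\|+\|\vec v\|)$ and $\|[H_1,[H_1,H_2]]\vec v\|\le\widetilde C_2(\|H_1\vec v\|+\|\vec v\|)$. Then: (1) For every vector $\vec v$, $\|D_1\vec v\|\le\|H_1\vec v\|+\|\vec v\|$. (2) For every real $\xi$ with $(\widetilde C_1+\|H_2\|)|\xi|\le1/2$ and every vector $\vec v$, $\|H_1\exp(\mathrm{i}\xi H_2)\vec v\|\le2(\|H_1\vec v\|+\|\vec v\|)$. (3) Let $K\ge1$, $h>0$, and for $1\le k\le K$ let $H_{l_k}\in\{H_1,H_2\}$ and $\xi_k\in\mathbb{R}$ with $(\widetilde C_1+\|H_2\|)|\xi_k|h\le1/2$. Put $\vec w=\big[\prod_{k=1}^K\exp(\mathrm{i} h\xi_kH_{l_k})\big]\vec v$. Then there is a constant $\widetilde C>0$, independent of $H_1$ and $\vec v$, such that for every $\vec v$: $\|H_1\vec w\|\le\widetilde C(\|H_1\vec v\|+\|\vec v\|)$, $\|H_2\vec w\|\le\widetilde C\|\vec v\|$, $\|[H_1,H_2]\vec w\|\le\widetilde C(\sqrt{\|\vec v\|\|H_1\vec v\|}+\|\vec v\|)$, $\|[H_1,[H_1,H_2]]\vec w\|\le\widetilde C(\|H_1\vec v\|+\|\vec v\|)$, and $\|[H_2,[H_2,H_1]]\vec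 w\|\le\widetilde C(\|H_1\vec v\|+\|\vec v\|)$.
   Context: $\|\cdot\|$ is the Euclidean vector 2-norm and the induced operator norm. $[A,B]=AB-BA$. *)

(* Defs.v *)
From HB Require Import structures.
From mathcomp Require Import all_boot all_order all_algebra.
From mathcomp Require Import complex.
From mathcomp Require Import all_classical all_reals all_analysis.
Set Implicit Arguments. Unset Strict Implicit. Unset Printing Implicit Defensive.
Import Order.TTheory GRing.Theory Num.Theory numFieldNormedType.Exports.
Local Open Scope ring_scope.
Local Open Scope complex_scope.
Local Open Scope classical_set_scope.

Definition vnorm (R : realType) (n : nat) (v : 'cV[R[i]]_n) : R :=
  Num.sqrt (\sum_(j < n) ((complex.Re (v j 0)) ^+ 2 + (complex.Im (v j 0)) ^+ 2)).

Definition opnorm (R : realType) (m n : nat) (A : 'M[R[i]]_(m, n)) : R :=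
  sup [set vnorm (A *m v) | v in [set v : 'cV[R[i]]_n | vnorm v <= 1]].

Definition adjmx (R : realType) (m n : nat) (A : 'M[R[i]]_(m, n)) : 'M[R[i]]_(n, m) :=
  \matrix_(i, j) conjc (A j i).

Definition hermmx (R : realType) (n : nat) (A : 'M[R[i]]_n) : Prop :=
  adjmx A = A.

Definition mxcomm (R : realType) (n : nat) (A B : 'M[R[i]]_n) : 'M[R[i]]_n :=
  A *m B - B *m A.

Definition mxpow (R : realType) (n : nat) (A : 'M[R[i]]_n) (k : nat) : 'M[R[i]]_n :=
  iter k (mulmx A) 1%:M.

Definition expmx_partial (R : realType) (n : nat) (A : 'M[R[i]]_n) (N : nat) :
  'M[R[i]]_n :=
  \sum_(k < N) ((k`!%:R)^-1 : R)%:C *: mxpow A k.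

Definition expmx (R : realType) (n : nat) (A : 'M[R[i]]_n) : 'M[R[i]]_n :=
  \matrix_(i, j)
    ((limn (fun N => complex.Re (expmx_partial A N i j)))
       +i* (limn (fun N => complex.Im (expmx_partial A N i j)))).

Definition expi (R : realType) (n : nat) (x : R) (A : 'M[R[i]]_n) : 'M[R[i]]_n :=
  expmx (('i * x%:C) *: A).

Definition mxprod (R : realType) (n : nat) (F : nat -> 'M[R[i]]_n) (K : nat) :
  'M[R[i]]_n :=
  foldr (fun k acc => F k *m acc) 1%:M (iota 0 K).

(* Main.v *)
Require Import Defs.
From HB Require Import structures.
From mathcomp Require Import all_boot all_order all_algebra.
From mathcomp Require Import complex.
From mathcomp Require Import all_classical all_reals all_analysis.
From mathcomp Require Import ring lra.
Import Order.TTheory GRing.Theory Num.Theory numFieldNormedType.Exports.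
Local Open Scope ring_scope.
Set Implicit Arguments. Unset Strict Implicit. Unset Printing Implicit Defensive.

Section Norms.
Variable R : realType.
Local Notation C := R[i].

Definition cn2 (z : C) : R := complex.Re z ^+ 2 + complex.Im z ^+ 2.

Lemma cn2_ge0 z : 0 <= cn2 z.
Proof. by rewrite /cn2 addr_ge0 // sqr_ge0. Qed.

Lemma cn2M a b : cn2 (a * b) = cn2 a * cn2 b.
Proof. case: a => a1 a2; case: b => b1 b2; rewrite /cn2 /=; ring. Qed.

Lemma conjcM_Re (a b : C) : complex.Re (conjc a * b) =
  complex.Re a * complex.Re b + complex.Im a * complex.Im b.
Proof. case: a => a1 a2; case: b => b1 b2 => /=; ring. Qed.

Lemma conjc_mul_self (a : C) : conjc a * a = (cn2 a)%:C%C.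
Proof. case: a => a1 a2; rewrite /cn2 /=; congr (_ +i* _)%C; ring. Qed.

Variable n : nat.
Implicit Types u v w : 'cV[C]_n.

Definition nsq v : R := \sum_(j < n) cn2 (v j 0).
Definition rdot u w : R :=
  \sum_(j < n) (complex.Re (u j 0) * complex.Re (w j 0) +
                complex.Im (u j 0) * complex.Im (w j 0)).

Lemma vnormE v : vnorm v = Num.sqrt (nsq v).
Proof. by []. Qed.

Lemma nsq_ge0 v : 0 <= nsq v.
Proof. by apply: sumr_ge0 => j _; apply: cn2_ge0. Qed.

Lemma vnorm_ge0 v : 0 <= vnorm v.
Proof. exact: sqrtr_ge0. Qed.

Lemma sqr_vnorm v : vnorm v ^+ 2 = nsq v.
Proof. by rewrite vnormE sqr_sqrtr // nsq_ge0. Qed.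

Lemma rdot_self v : rdot v v = nsq v.
Proof. by apply: eq_bigr => j _; rewrite /cn2 !expr2. Qed.

Lemma nsq_quad u w (t : R) :
  nsq (u - t%:C%C *: w) = nsq u - 2 * t * rdot u w + t ^+ 2 * nsq w.
Proof.
rewrite /nsq /rdot mulr_sumr mulr_sumr -sumrB -big_split /=.
apply: eq_bigr => j _; rewrite !mxE /cn2.
case: (u j 0) => a b; case: (w j 0) => c d /=; ring.
Qed.

Lemma CS_sqr u w : rdot u w ^+ 2 <= nsq u * nsq w.
Proof.
have [w0|wpos] := eqVneq (nsq w) 0.
  have H : forall j, w j 0 = 0.
    move=> j; move/eqP: w0; rewrite /nsq psumr_eq0; last by move=> k _; apply: cn2_ge0.
    move/allP/(_ j (mem_index_enum _)) => /=; rewrite /cn2 paddr_eq0 ?sqr_ge0 //.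
    rewrite !sqrf_eq0; case: (w j 0) => a b /= /andP[/eqP-> /eqP->] //.
  have -> : rdot u w = 0.
    by rewrite /rdot big1 // => j _; rewrite H /= !mulr0 addr0.
  by rewrite w0 expr0n mulr0.
have wgt : 0 < nsq w by rewrite lt_neqAle eq_sym wpos nsq_ge0.
have := nsq_ge0 (u - (rdot u w / nsq w)%:C%C *: w).
rewrite nsq_quad => H.
have H2 : 0 <= nsq u * nsq w - rdot u w ^+ 2.
  have -> : nsq u * nsq w - rdot u w ^+ 2 =
    (nsq u - 2 * (rdot u w / nsq w) * rdot u w + (rdot u w / nsq w) ^+ 2 * nsq w) * nsq w.
    by field; rewrite wpos.
  by rewrite mulr_ge0 // nsq_ge0.
by rewrite -subr_ge0.
Qed.

Lemma CS u w : rdot u w <= vnorm u * vnorm w.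
Proof.
have [neg|pos] := ltP (rdot u w) 0.
  by apply: le_trans (ltW neg) _; rewrite mulr_ge0 // vnorm_ge0.
rewrite -(@ler_pXn2r _ 2) //; last by rewrite nnegrE mulr_ge0 ?vnorm_ge0.
by rewrite exprMn !sqr_vnorm CS_sqr.
Qed.

Lemma nsqD u w : nsq (u + w) = nsq u + 2 * rdot u w + nsq w.
Proof.
rewrite /nsq /rdot mulr_sumr -!big_split /=; apply: eq_bigr => j _.
rewrite !mxE /cn2; case: (u j 0) => a b; case: (w j 0) => c d /=; ring.
Qed.

Lemma vnormD u w : vnorm (u + w) <= vnorm u + vnorm w.
Proof.
rewrite -(@ler_pXn2r _ 2) //; last by rewrite nnegrE addr_ge0 ?vnorm_ge0.
  rewrite sqr_vnorm nsqD sqrrD !sqr_vnorm; have := CS u w; lra.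
by rewrite nnegrE vnorm_ge0.
Qed.

Lemma nsqZ (c : C) v : nsq (c *: v) = cn2 c * nsq v.
Proof.
rewrite /nsq mulr_sumr; apply: eq_bigr => j _; rewrite !mxE; exact: cn2M.
Qed.

Lemma vnormZ (c : C) v : vnorm (c *: v) = Num.sqrt (cn2 c) * vnorm v.
Proof. by rewrite !vnormE nsqZ sqrtrM // cn2_ge0. Qed.

Lemma vnormN v : vnorm (- v) = vnorm v.
Proof.
rewrite -scaleN1r vnormZ.
have -> : cn2 (-1) = 1 by rewrite /cn2 /=; ring.
by rewrite sqrtr1 mul1r.
Qed.

Lemma vnormB u w : vnorm (u - w) <= vnorm u + vnorm w.
Proof. by rewrite -(vnormN w); apply: vnormD. Qed.

End Norms.

Section Adj.
Variable R : realType.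
Local Notation C := R[i].

Lemma adjmx_mul m n p (A : 'M[C]_(m, n)) (B : 'M[C]_(n, p)) :
  adjmx (A *m B) = adjmx B *m adjmx A.
Proof.
apply/matrixP => i j; rewrite !mxE rmorph_sum; apply: eq_bigr => k _.
by rewrite !mxE rmorphM mulrC.
Qed.

Lemma adjmxK m n (A : 'M[C]_(m, n)) : adjmx (adjmx A) = A.
Proof. by apply/matrixP => i j; rewrite !mxE conjcK. Qed.

Lemma adjmx1 n : adjmx (1%:M : 'M[C]_n) = 1%:M.
Proof.
by apply/matrixP => i j; rewrite !mxE conjc_nat eq_sym.
Qed.

Lemma adjmxD m n (A B : 'M[C]_(m, n)) : adjmx (A + B) = adjmx A + adjmx B.
Proof. by apply/matrixP => i j; rewrite !mxE rmorphD. Qed.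

Lemma adjmxN m n (A : 'M[C]_(m, n)) : adjmx (- A) = - adjmx A.
Proof. by apply/matrixP => i j; rewrite !mxE rmorphN. Qed.

Lemma adjmx_diag n (r : 'rV[C]_n) :
  adjmx (diag_mx r) = diag_mx (\row_j conjc (r 0 j)).
Proof.
apply/matrixP => i j; rewrite !mxE rmorphMn eq_sym; case: eqP => [->|] //=; by rewrite !mulr0n.
Qed.

Lemma adjmx_entry m n (A : 'M[C]_(m, n)) i j : adjmx A i j = conjc (A j i).
Proof. by rewrite mxE. Qed.

Variable n : nat.
Implicit Types u v w : 'cV[C]_n.

Lemma rdot_adj k (u w : 'cV[C]_k) : rdot u w = complex.Re ((adjmx u *m w) 0 0).
Proof.
rewrite !mxE /rdot raddf_sum /=; apply: eq_bigr => j _.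
by rewrite mxE conjcM_Re.
Qed.

Lemma nsq_adj k (v : 'cV[C]_k) : (nsq v)%:C%C = (adjmx v *m v) 0 0.
Proof.
rewrite !mxE /nsq raddf_sum /=; apply: eq_bigr => j _.
by rewrite mxE conjc_mul_self.
Qed.

Lemma nsq_real k (v : 'cV[C]_k) : nsq v = complex.Re ((adjmx v *m v) 0 0).
Proof. by rewrite -nsq_adj. Qed.

Lemma unitary_vnorm (Q : 'M[C]_n) v :
  adjmx Q *m Q = 1%:M -> vnorm (Q *m v) = vnorm v.
Proof.
move=> HQ; rewrite !vnormE (_ : nsq (Q *m v) = nsq v) //.
by rewrite !nsq_real adjmx_mul mulmxA -(mulmxA (adjmx v)) HQ mulmx1.
Qed.

Lemma CS_D m (D : 'M[C]_(m, n)) v :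
  vnorm (D *m v) ^+ 2 <= vnorm v * vnorm ((adjmx D *m D) *m v).
Proof.
rewrite sqr_vnorm nsq_real adjmx_mul -mulmxA (mulmxA (adjmx D)) -rdot_adj.
exact: CS.
Qed.

Lemma nsq_diag (r : 'rV[C]_n) v :
  nsq (diag_mx r *m v) = \sum_(j < n) cn2 (r 0 j) * cn2 (v j 0).
Proof.
by rewrite /nsq; apply: eq_bigr => j _; rewrite mul_diag_mx mxE cn2M.
Qed.

Lemma diag_bound (r : 'rV[C]_n) (M : R) v :
  0 <= M -> (forall j, cn2 (r 0 j) <= M ^+ 2) ->
  vnorm (diag_mx r *m v) <= M * vnorm v.
Proof.
move=> M0 Hr; rewrite !vnormE -[M in M * _](ger0_norm M0) -sqrtr_sqr -sqrtrM ?sqr_ge0 //.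
rewrite ler_wsqrtr // nsq_diag /nsq mulr_sumr; apply: ler_sum => j _.
by rewrite ler_wpM2r // cn2_ge0.
Qed.

Lemma diag_unit (r : 'rV[C]_n) v :
  (forall j, cn2 (r 0 j) = 1) -> vnorm (diag_mx r *m v) = vnorm v.
Proof.
move=> Hr; rewrite !vnormE nsq_diag (_ : \sum_(j < n) _ = nsq v) //.
by apply: eq_bigr => j _; rewrite Hr mul1r.
Qed.

End Adj.

Section Trig.
Variable R : realType.

Lemma sqr_norm (x : R) : `|x| ^+ 2 = x ^+ 2.
Proof. exact: real_normK (num_real x). Qed.

Lemma mvt_bound (f df : R -> R) (x B : R) :
  (forall y : R, is_derive y (1 : R) f (df y)) ->
  (forall y, `|y| <= `|x| -> `|df y| <= B) ->
  `|f x - f 0| <= B * `|x|.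
Proof.
move=> Hd HB.
have cf : continuous f.
  move=> y; apply: differentiable_continuous; apply/derivable1_diffP; apply: ex_derive; exact: Hd.
have h0 : `|(0:R)| <= `|x| by rewrite normr0 normr_ge0.
have B0 : 0 <= B by move: (HB 0 h0); apply: le_trans.
have [xlt|xgt|->] := ltgtP x 0; last by rewrite subrr !normr0 mulr0.
- have [c cin E] := @MVT R f df x 0 xlt (fun y _ => Hd y) (continuous_subspaceT cf).
  rewrite distrC E normrM sub0r normrN ler_wpM2r //; apply: HB.
  move: cin; rewrite in_itv /= => /andP[h1 h2].
  by rewrite !ltr0_norm //; lra.
- have [c cin E] := @MVT R f df 0 x xgt (fun y _ => Hd y) (continuous_subspaceT cf).
  rewrite E normrM subr0 ler_wpM2r //; apply: HB.
  move: cin; rewrite in_itv /= => /andP[h1 h2].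
  by rewrite !gtr0_norm //; lra.
Qed.

Lemma sin_bound (x : R) : `|sin x| <= `|x|.
Proof.
have := @mvt_bound (@sin R) (@cos R) x 1 (fun y => is_derive_sin y) (fun y _ => cos_max y).
by rewrite sin0 subr0 mul1r.
Qed.

Lemma cos_bound (x : R) : `|cos x - 1| <= x ^+ 2.
Proof.
have := @mvt_bound (@cos R) (fun y => - sin y) x `|x| (fun y => is_derive_cos y).
rewrite cos0 -normrM -expr2 normrX sqr_norm => H; apply: H => y Hy.
by rewrite normrN (le_trans (sin_bound y)).
Qed.

Lemma sinx_bound (x : R) : `|sin x - x| <= `|x| ^+ 3.
Proof.
have D : forall y : R, is_derive y (1:R) (fun z : R => sin z - z) (cos y - 1).
  by move=> y; apply: is_deriveB.
have := @mvt_bound (fun z : R => sin z - z) (fun y => cos y - 1) x (x ^+ 2) D.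
rewrite sin0 subr0 subr0 => H.
rewrite exprS mulrC sqr_norm; apply: H => y Hy.
apply: (le_trans (cos_bound y)); rewrite -sqr_norm -[x ^+ 2]sqr_norm.
by rewrite ler_pXn2r // nnegrE normr_ge0.
Qed.

End Trig.

Section Spec.
Local Open Scope sesquilinear_scope.
Variable R : realType.
Local Notation C := R[i].

Lemma adjmx_tc m n (A : 'M[C]_(m, n)) : adjmx A = A ^t Num.conj.
Proof. by apply/matrixP => i j; rewrite !mxE. Qed.

Lemma herm_spec n (A : 'M[C]_n) : hermmx A ->
  exists (P : 'M[C]_n) (lam : 'I_n -> R),
    [/\ adjmx P *m P = 1%:M, P *m adjmx P = 1%:M &
        A = adjmx P *m diag_mx (\row_j (lam j)%:C%C) *m P].
Proof.
move=> HA.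
have Hh : A \is hermsymmx.
  by apply/is_hermitianmxP; rewrite expr0 scale1r -adjmx_tc HA.
have /orthomx_spectralP E := hermitian_normalmx Hh.
have Hr := hermitian_spectral_diag_real Hh.
set P := spectralmx A in E.
have PU : P \is unitarymx := spectral_unitarymx A.
have Pu : P \in unitmx := spectral_unit A.
have iP : invmx P = adjmx P by rewrite invmx_unitary // adjmx_tc.
exists P, (fun j => complex.Re (spectral_diag A 0 j)); split.
- by rewrite -iP mulVmx.
- by rewrite -iP mulmxV.
- rewrite {1}E iP; congr (_ *m diag_mx _ *m _); apply/rowP => j; rewrite mxE.
  have : spectral_diag A 0 j \is Num.real by move/mxOverP: Hr; apply.
  by move/RRe_real.
Qed.

End Spec.

Section Scal.
Local Open Scope classical_set_scope.
Variable R : realType.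
Local Notation C := R[i].

Lemma Re_add (x y : C) : complex.Re (x + y) = complex.Re x + complex.Re y.
Proof. by case: x; case: y. Qed.
Lemma Im_add (x y : C) : complex.Im (x + y) = complex.Im x + complex.Im y.
Proof. by case: x; case: y. Qed.

Lemma Re_sum I (r : seq I) (F : I -> C) :
  complex.Re (\sum_(i <- r) F i) = \sum_(i <- r) complex.Re (F i).
Proof. by apply: (big_morph _ Re_add). Qed.
Lemma Im_sum I (r : seq I) (F : I -> C) :
  complex.Im (\sum_(i <- r) F i) = \sum_(i <- r) complex.Im (F i).
Proof. by apply: (big_morph _ Im_add). Qed.

Lemma Re_mul (x y : C) : complex.Re (x * y) =
  complex.Re x * complex.Re y - complex.Im x * complex.Im y.
Proof. by case: x => a b; case: y => c d. Qed.
Lemma Im_mul (x y : C) : complex.Im (x * y) =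
  complex.Re x * complex.Im y + complex.Im x * complex.Re y.
Proof. by case: x => a b; case: y => c d /=; ring. Qed.

Lemma cvg_sum_ord (k : nat) (f : 'I_k -> nat -> R) (l : 'I_k -> R) :
  (forall j, f j n @[n --> \oo] --> l j) ->
  (\sum_(j < k) f j n) @[n --> \oo] --> \sum_(j < k) l j.
Proof.
move=> H; apply: cvg_big => //.
exact: add_continuous.
Qed.

Lemma Re_realM (a : R) (z : C) : complex.Re (a%:C%C * z) = a * complex.Re z.
Proof. by case: z => x y /=; ring. Qed.
Lemma Im_realM (a : R) (z : C) : complex.Im (a%:C%C * z) = a * complex.Im z.
Proof. by case: z => x y /=; ring. Qed.

Lemma iX_even m : ('i%C : C) ^+ (m.*2) = ((-1) ^+ m)%:C%C.
Proof.
by rewrite -mul2n exprM sqr_i rmorphXn rmorphN1.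
Qed.

Lemma iX_odd m : ('i%C : C) ^+ (m.*2.+1) = 'i%C * ((-1) ^+ m)%:C%C.
Proof. by rewrite exprS iX_even. Qed.

Lemma Re_iX k : complex.Re (('i%C : C) ^+ k) = (~~ odd k)%:R * (-1) ^+ k./2.
Proof.
have E := odd_double_half k; set m := k./2 in E *.
case Ho: (odd k) in E *.
- have -> : k = m.*2.+1 by rewrite -E.
  by rewrite iX_odd /= !mul0r mul1r subr0.
- have -> : k = m.*2 by rewrite -E.
  by rewrite iX_even /= mul1r.
Qed.

Lemma Im_iX k : complex.Im (('i%C : C) ^+ k) = (odd k)%:R * (-1) ^+ k.-1./2.
Proof.
have E := odd_double_half k; set m := k./2 in E *.
case Ho: (odd k) in E *.
- have -> : k = m.*2.+1 by rewrite -E.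
  by rewrite iX_odd /= half_double mul0r add0r.
- have -> : k = m.*2 by rewrite -E.
  by rewrite iX_even /= mul0r.
Qed.

Definition sN (z : C) (N : nat) : C :=
  \sum_(k < N) ((k`!%:R)^-1 : R)%:C%C * z ^+ k.

Lemma iXM (t : R) k : ('i%C * t%:C%C) ^+ k = ('i%C : C) ^+ k * (t ^+ k)%:C%C.
Proof. by rewrite exprMn rmorphXn. Qed.

Lemma Re_sN (t : R) N : complex.Re (sN ('i%C * t%:C%C) N) = series (cos_coeff t) N.
Proof.
rewrite /sN /series /= Re_sum big_mkord; apply: eq_bigr => k _.
rewrite iXM mulrA Re_mul /= Re_realM Im_realM /= Re_iX /cos_coeff /=.
by rewrite mulr0 subr0 -exprnP; ring.
Qed.

Lemma Im_sN (t : R) N : complex.Im (sN ('i%C * t%:C%C) N) = series (sin_coeff t) N.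
Proof.
rewrite /sN /series /= Im_sum big_mkord; apply: eq_bigr => k _.
rewrite iXM mulrA Im_mul /= Re_realM Im_realM /= Im_iX /sin_coeff /=.
by rewrite mulr0 ?addr0 ?add0r; ring.
Qed.

End Scal.

Section Exp.
Local Open Scope classical_set_scope.
Variable R : realType.
Local Notation C := R[i].
Variable n : nat.
Variable P : 'M[C]_n.
Hypothesis HP1 : adjmx P *m P = 1%:M.
Hypothesis HP2 : P *m adjmx P = 1%:M.

Definition cjP (r : 'rV[C]_n) := adjmx P *m diag_mx r *m P.

Lemma cjP_entry r a b : cjP r a b = \sum_(j < n) conjc (P j a) * r 0 j * P j b.
Proof.
rewrite /cjP -mulmxA mxE; apply: eq_bigr => j _.
by rewrite mul_diag_mx !mxE mulrA.
Qed.

Lemma cjP_mul r s : cjP r *m cjP s = cjP (\row_j (r 0 j * s 0 j)).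
Proof.
rewrite /cjP -!mulmxA (mulmxA P) HP2 mul1mx !mulmxA -(mulmxA (adjmx P)).
by rewrite mulmx_diag.
Qed.

Lemma cjP1 : cjP (\row_j 1) = 1%:M.
Proof.
rewrite /cjP (_ : diag_mx _ = 1%:M) ?mulmx1 //.
by apply/matrixP => i j; rewrite !mxE.
Qed.

Lemma cjP_scale (c : C) r : c *: cjP r = cjP (\row_j (c * r 0 j)).
Proof.
rewrite /cjP scalemxAl scalemxAr; congr (_ *m _ *m _).
by apply/matrixP => i j; rewrite !mxE mulrnAr.
Qed.

Lemma cjP_add r s : cjP r + cjP s = cjP (r + s).
Proof.
rewrite /cjP -mulmxDl -mulmxDr; congr (_ *m _ *m _).
by apply/matrixP => i j; rewrite !mxE mulrnDl.
Qed.

Lemma cjP_opp r : - cjP r = cjP (- r).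
Proof.
rewrite /cjP -mulNmx -mulmxN; congr (_ *m _ *m _).
by apply/matrixP => i j; rewrite !mxE mulNrn.
Qed.

Variable lam : 'I_n -> R.
Definition Lrow : 'rV[C]_n := \row_j (lam j)%:C%C.
Local Notation A := (cjP Lrow).

Lemma mxpow_cjP (c : C) k :
  mxpow (c *: A) k = cjP (\row_j (c * (lam j)%:C%C) ^+ k).
Proof.
elim: k => [|k IH].
  rewrite /mxpow /= -cjP1; congr cjP; apply/rowP => j; rewrite !mxE //.
rewrite /mxpow iterS -/(mxpow _ k) IH cjP_scale cjP_mul; congr cjP.
by apply/rowP => j; rewrite !mxE exprS.
Qed.

Lemma partial_entry (c : C) N a b :
  expmx_partial (c *: A) N a b =
  \sum_(j < n) (conjc (P j a) * P j b) * sN (c * (lam j)%:C%C) N.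
Proof.
rewrite /expmx_partial summxE.
under eq_bigr do rewrite mxE mxpow_cjP cjP_entry mulr_sumr.
rewrite exchange_big /=; apply: eq_bigr => j _.
rewrite /sN mulr_sumr; apply: eq_bigr => k _; rewrite mxE; ring.
Qed.

Lemma cvg_cos (t : R) : series (cos_coeff t) @ \oo --> cos t.
Proof. rewrite cos.unlock. exact: is_cvg_series_cos_coeff. Qed.
Lemma cvg_sin (t : R) : series (sin_coeff t) @ \oo --> sin t.
Proof. rewrite sin.unlock. exact: is_cvg_series_sin_coeff. Qed.

Definition eR (x : R) : 'rV[C]_n :=
  \row_j (cos (x * lam j) +i* sin (x * lam j))%C.

Lemma expi_cjP x : expi x A = cjP (eR x).
Proof.
apply/matrixP => a b; rewrite /expi /expmx mxE cjP_entry.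
set w := fun j => conjc (P j a) * P j b.
set th := fun j => x * lam j.
have key : forall N, expmx_partial (('i%C * x%:C%C) *: A) N a b =
    \sum_(j < n) w j * sN ('i%C * (th j)%:C%C) N.
  move=> N; rewrite partial_entry; apply: eq_bigr => j _.
  by rewrite /th rmorphM mulrA.
have E1 : (fun N => complex.Re (expmx_partial (('i%C * x%:C%C) *: A) N a b)) =
  (fun N => \sum_(j < n) (complex.Re (w j) * series (cos_coeff (th j)) N -
                          complex.Im (w j) * series (sin_coeff (th j)) N)).
  apply: funext => N; rewrite key Re_sum; apply: eq_bigr => j _.
  by rewrite Re_mul Re_sN Im_sN.
have E2 : (fun N => complex.Im (expmx_partial (('i%C * x%:C%C) *: A) N a b)) =
  (fun N => \sum_(j < n) (complex.Re (w j) * series (sin_coeff (th j)) N +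
                          complex.Im (w j) * series (cos_coeff (th j)) N)).
  apply: funext => N; rewrite key Im_sum; apply: eq_bigr => j _.
  by rewrite Im_mul Re_sN Im_sN.
rewrite E1 E2.
have L1 : (fun N => \sum_(j < n) (complex.Re (w j) * series (cos_coeff (th j)) N -
                          complex.Im (w j) * series (sin_coeff (th j)) N)) @ \oo -->
   (\sum_(j < n) (complex.Re (w j) * cos (th j) - complex.Im (w j) * sin (th j))).
  apply: cvg_sum_ord => j; apply: cvgB; apply: cvgMl_tmp.
  - exact: cvg_cos.
  - exact: cvg_sin.
have L2 : (fun N => \sum_(j < n) (complex.Re (w j) * series (sin_coeff (th j)) N +
                          complex.Im (w j) * series (cos_coeff (th j)) N)) @ \oo -->
   (\sum_(j < n) (complex.Re (w j) * sin (th j) + complex.Im (w j) * cos (th j))).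
  apply: cvg_sum_ord => j; apply: cvgD; apply: cvgMl_tmp.
  - exact: cvg_sin.
  - exact: cvg_cos.
rewrite (cvg_lim _ L1) // (cvg_lim _ L2) //.
have -> : \sum_(j < n) conjc (P j a) * eR x 0 j * P j b =
          \sum_(j < n) w j * (cos (th j) +i* sin (th j))%C.
  by apply: eq_bigr => j _; rewrite /w mxE; ring.
set T := \sum_(j < n) w j * _.
have -> : T = (complex.Re T +i* complex.Im T)%C by case: T.
rewrite /T Re_sum Im_sum; congr (_ +i* _)%C; apply: eq_bigr => j _.
  by rewrite [RHS]Re_mul.
by rewrite [RHS]Im_mul /= addrC.
Qed.

Lemma cjP_vnorm (r : 'rV[C]_n) (y : 'cV[C]_n) : (forall j, cn2 (r 0 j) = 1) ->
  vnorm (cjP r *m y) = vnorm y.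
Proof.
move=> Hr; rewrite /cjP -!mulmxA unitary_vnorm; last by rewrite adjmxK HP2.
by rewrite diag_unit // unitary_vnorm.
Qed.

Lemma cjP_bound (r : 'rV[C]_n) (M : R) (y : 'cV[C]_n) : 0 <= M -> (forall j, cn2 (r 0 j) <= M ^+ 2) ->
  vnorm (cjP r *m y) <= M * vnorm y.
Proof.
move=> M0 Hr; rewrite /cjP -!mulmxA unitary_vnorm; last by rewrite adjmxK HP2.
by rewrite -(unitary_vnorm y HP1) diag_bound.
Qed.

Lemma eR_unit x j : cn2 (eR x 0 j) = 1.
Proof. by rewrite /eR mxE /cn2 /= cos2Dsin2. Qed.

Lemma U_add x y : cjP (eR x) *m cjP (eR y) = cjP (eR (x + y)).
Proof.
rewrite cjP_mul; congr cjP; apply/rowP => j; rewrite !mxE /= mulrDl cosD sinD.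
congr (_ +i* _)%C; ring.
Qed.

Lemma U0 : cjP (eR 0) = 1%:M.
Proof.
rewrite -cjP1; congr cjP; apply/rowP => j; rewrite !mxE mul0r cos0 sin0 //.
Qed.

Lemma U_comm (r : 'rV[C]_n) : A *m cjP r = cjP r *m A.
Proof. by rewrite !cjP_mul; congr cjP; apply/rowP => j; rewrite !mxE mulrC. Qed.

Definition Lam : R := 1 + \sum_(j < n) lam j ^+ 2.

Lemma Lam_ge1 : 1 <= Lam.
Proof. by rewrite /Lam lerDl sumr_ge0 // => j _; rewrite sqr_ge0. Qed.

Lemma lam_le j : lam j ^+ 2 <= Lam.
Proof.
rewrite /Lam (bigD1 j) //=.
have : 0 <= \sum_(i < n | i != j) lam i ^+ 2 by apply: sumr_ge0 => k _; rewrite sqr_ge0.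
lra.
Qed.

Lemma A_bound (y : 'cV[C]_n) : vnorm (A *m y) <= Lam * vnorm y.
Proof.
apply: cjP_bound; first by apply: le_trans Lam_ge1.
move=> j; rewrite mxE /cn2 /= expr0n /= addr0.
apply: (le_trans (lam_le j)); rewrite expr2 ler_peMr //; first by apply: le_trans Lam_ge1.
exact: Lam_ge1.
Qed.

Definition Rem (x : R) := cjP (eR x) - 1%:M - ('i%C * x%:C%C) *: A.

Lemma RemE x : Rem x = cjP (\row_j ((cos (x * lam j) - 1) +i* (sin (x * lam j) - x * lam j))%C).
Proof.
rewrite /Rem -cjP1 cjP_scale cjP_opp cjP_add cjP_opp cjP_add; congr cjP.
apply/rowP => j; rewrite !mxE; apply/eqP; rewrite eq_complex /=; apply/andP; split; apply/eqP; ring.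
Qed.

Lemma Rem_bound (x : R) (y : 'cV[C]_n) : x ^+ 2 * Lam <= 1 ->
  vnorm (Rem x *m y) <= (2 * (x ^+ 2 * Lam)) * vnorm y.
Proof.
move=> Hx; rewrite RemE; apply: cjP_bound.
  by rewrite mulr_ge0 // mulr_ge0 ?sqr_ge0 //; apply: le_trans Lam_ge1.
move=> j; rewrite mxE /cn2 /=.
set t := x * lam j.
have ht : t ^+ 2 <= x ^+ 2 * Lam by rewrite /t exprMn ler_wpM2l ?sqr_ge0 ?lam_le.
have ht1 : `|t| <= 1.
  rewrite -(@ler_pXn2r _ 2) ?nnegrE ?normr_ge0 // expr1n sqr_norm.
  exact: le_trans ht Hx.
have h1 := cos_bound t.
have h2 : `|sin t - t| <= t ^+ 2.
  apply: (le_trans (sinx_bound t)); rewrite -sqr_norm exprS.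
  by rewrite ler_piMl ?exprn_ge0 ?normr_ge0.
have e1 : (cos t - 1) ^+ 2 <= (t ^+ 2) ^+ 2.
  by rewrite -sqr_norm ler_pXn2r ?nnegrE ?normr_ge0 ?sqr_ge0.
have e2 : (sin t - t) ^+ 2 <= (t ^+ 2) ^+ 2.
  by rewrite -sqr_norm ler_pXn2r ?nnegrE ?normr_ge0 ?sqr_ge0.
have e3 : (t ^+ 2) ^+ 2 <= (x ^+ 2 * Lam) ^+ 2.
  by rewrite ler_pXn2r ?nnegrE ?sqr_ge0 // (le_trans (sqr_ge0 t) ht).
have e4 : 0 <= (t ^+ 2) ^+ 2 by rewrite sqr_ge0.
rewrite exprMn; nra.
Qed.

End Exp.

Section Real.
Local Open Scope classical_set_scope.
Variable R : realType.

Lemma gronwall (a : nat -> R) (al E nu : R) (N : nat) :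
  0 <= al -> 0 <= E -> 0 <= nu -> 0 <= a 0%N -> N%:R * al <= 2^-1 ->
  (forall k, a k.+1 <= a k + al * (a k + 2 * nu) + E) ->
  a N <= 2 * a 0%N + 2 * nu + 2 * (N%:R * E).
Proof.
move=> al0 E0 nu0 a00 HN Hs.
set B := 2 * a 0%N + 2 * nu + 2 * (N%:R * E).
set d := al * (B + 2 * nu) + E.
have N0 : 0 <= (N%:R : R) by [].
have Bd : a 0%N + N%:R * d <= B.
  rewrite /d /B mulrDr mulrA.
  have h : N%:R * al * (2 * a 0%N + 2 * nu + 2 * (N%:R * E) + 2 * nu) <=
           2^-1 * (2 * a 0%N + 2 * nu + 2 * (N%:R * E) + 2 * nu).
    apply: ler_wpM2r => //.
    by rewrite !addr_ge0 // mulr_ge0 // mulr_ge0.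
  lra.
have claim : forall k, (k <= N)%N -> a k <= a 0%N + k%:R * d.
  elim=> [|k IH] Hk; first by rewrite mul0r addr0.
  have Hk' : (k <= N)%N by apply: ltnW.
  have ak := IH Hk'.
  have kN : (k%:R : R) <= N%:R by rewrite ler_nat.
  have d0 : 0 <= d by rewrite /d addr_ge0 // mulr_ge0 // /B !addr_ge0 // !mulr_ge0.
  have akB : a k <= B.
    apply: le_trans ak _; apply: le_trans Bd; rewrite lerD2l ler_wpM2r //.
  have h1 : al * (a k + 2 * nu) <= al * (B + 2 * nu) by rewrite ler_wpM2l // lerD2r.
  apply: le_trans (Hs k) _; rewrite -[k.+1]addn1 natrD mulrDl mul1r /d.
  rewrite /d in ak h1; lra.
apply: le_trans (claim N (leqnn N)) Bd.
Qed.

Lemma le_eps (X Y K : R) (N0 : nat) : 0 <= K ->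
  (forall N : nat, (N0 <= N)%N -> X <= Y + K / N%:R) -> X <= Y.
Proof.
move=> K0 H; case: (leP X Y) => // HXY.
set d := X - Y.
have d0 : 0 < d by rewrite /d subr_gt0.
have Kd : 0 <= K / d by rewrite divr_ge0 // ltW.
set N := (N0 + Num.bound (K / d)).+1.
have hb := archi_boundP Kd.
have NN : (Num.bound (K / d))%:R < (N%:R : R) by rewrite ltr_nat /N ltnS leq_addl.
have Npos : (0 : R) < N%:R by rewrite ltr0n.
have HK : K / N%:R < d.
  rewrite ltr_pdivrMr // -ltr_pdivrMl //.
  by rewrite mulrC; apply: lt_trans hb NN.
have := H N (leq_trans (leq_addr _ _) (leqnSn _)); rewrite /d in HK; lra.
Qed.

End Real.

Section Main.
Local Open Scope classical_set_scope.
Variable R : realType.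
Local Notation C := R[i].

Lemma zid (V : lmodType C) (u1 u2 p q r : V) (c : C) :
  u1 = u2 + ((u1 - p - c *: q) - (u2 - p - c *: r)) + c *: (q - r).
Proof.
rewrite scalerBr !opprB [u1 - p - _ + _]addrC !addrA subrK.
rewrite [u2 + c *: r]addrC -(addrA (c *: r)) (addrC u2 p) addrA addrK.
rewrite [X in X - p]addrC addrA addrK addrK //.
Qed.


Variable n : nat.

Lemma comm_decomp (H1 H2 U Rm : 'M[C]_n) (c : C) (x : 'cV[C]_n) :
  Rm = U - 1%:M - c *: H2 ->
  H1 *m (U *m x) = U *m (H1 *m x) + (H1 *m (Rm *m x) - Rm *m (H1 *m x))
                   + c *: (mxcomm H1 H2 *m x).
Proof.
move=> ->; rewrite /mxcomm !mulmxBl !mul1mx !mulmxBr -!scalemxAl -!scalemxAr.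
rewrite !mulmxA.
exact: zid.
Qed.

Lemma herm_bound (A : 'M[C]_n) : hermmx A ->
  exists h : R, 0 <= h /\ forall y, vnorm (A *m y) <= h * vnorm y.
Proof.
move=> hA; have [P [lam [HP1 HP2 E]]] := herm_spec hA.
exists (Lam lam); split; first by apply: le_trans (Lam_ge1 lam).
by move=> y; rewrite E; apply: (A_bound HP1 HP2).
Qed.

Lemma part1 m (H1 : 'M[C]_n) (D1 : 'M[C]_(m, n)) v :
  H1 = adjmx D1 *m D1 -> vnorm (D1 *m v) <= vnorm (H1 *m v) + vnorm v.
Proof.
move=> E; have := CS_D D1 v; rewrite -E => h.
have := vnorm_ge0 (D1 *m v); have := vnorm_ge0 v; have := vnorm_ge0 (H1 *m v).
nra.
Qed.

Lemma part2 m (H1 H2 : 'M[C]_n) (D1 : 'M[C]_(m, n)) (C1 xi : R) :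
  hermmx H1 -> hermmx H2 -> H1 = adjmx D1 *m D1 -> 0 <= C1 ->
  (forall v, vnorm (mxcomm H1 H2 *m v) <= C1 * (vnorm (D1 *m v) + vnorm v)) ->
  C1 * `|xi| <= 2^-1 ->
  forall v, vnorm (H1 *m (expi xi H2 *m v)) <= 2 * (vnorm (H1 *m v) + vnorm v).
Proof.
move=> hH1 hH2 ED C10 HT Hxi v.
have [h [h0 Hh]] := herm_bound hH1.
have [P [lam [HP1 HP2 E2]]] := herm_spec hH2.
have EH2 : H2 = cjP P (Lrow lam) by rewrite E2.
rewrite EH2 in HT *.
rewrite (expi_cjP HP1 HP2).
set nu := vnorm v; set a0 := vnorm (H1 *m v).
set L := Lam lam.
have L1 : 1 <= L := Lam_ge1 lam.
have L0 : 0 <= L := le_trans ler01 L1.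
have nu0 : 0 <= nu := vnorm_ge0 v.
have a00 : 0 <= a0 := vnorm_ge0 _.
have K0 : 0 <= 8 * (xi ^+ 2 * L) * h * nu.
  by rewrite mulr_ge0 // mulr_ge0 // mulr_ge0 // mulr_ge0 // sqr_ge0.
apply: (@le_eps _ _ _ (8 * (xi ^+ 2 * L) * h * nu) (Num.bound (xi ^+ 2 * L)).+1 K0).
move=> N HN.
have Npos : (0 < N)%N by apply: leq_trans HN.
have NR : (0:R) < N%:R by rewrite ltr0n.
set t := xi / N%:R.
set U := cjP P (eR lam t).
have iterU : forall k, iter k (mulmx U) v = cjP P (eR lam (k%:R * t)) *m v.
  elim=> [|k IH]; first by rewrite /= mul0r (U0 HP1) mul1mx.
  by rewrite iterS IH mulmxA /U (U_add HP2) -[k.+1]add1n natrD mulrDl mul1r.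
have xiE : N%:R * t = xi by rewrite /t mulrC divfK // gt_eqF.
set x := fun k => iter k (mulmx U) v.
have nk : forall k, vnorm (x k) = nu.
  by move=> k; rewrite /x iterU (cjP_vnorm HP1 HP2) // => j; apply: eR_unit.
have XL0 : 0 <= xi ^+ 2 * L by rewrite mulr_ge0 ?sqr_ge0.
have tsmall : t ^+ 2 * L <= 1.
  have hb := archi_boundP XL0.
  have hN : (Num.bound (xi ^+ 2 * L))%:R < (N%:R : R) by rewrite ltr_nat.
  have N1 : (1 : R) <= N%:R by rewrite ler1n.
  have -> : t ^+ 2 * L = (xi ^+ 2 * L) / (N%:R ^+ 2) by rewrite /t expr_div_n; field; rewrite gt_eqF.
  rewrite ler_pdivrMr ?exprn_gt0 // mul1r.
  apply: le_trans (ltW (lt_trans hb hN)) _.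
  by rewrite expr2 ler_peMl // ltW.
have tN : N%:R * (`|t| * C1) <= 2^-1.
  rewrite /t normrM normfV (ger0_norm (ltW NR)).
  have -> : N%:R * (`|xi| / N%:R * C1) = C1 * `|xi| by field; rewrite gt_eqF.
  exact: Hxi.
set rho := 2 * (t ^+ 2 * L).
have rho0 : 0 <= rho by rewrite mulr_ge0 // mulr_ge0 ?sqr_ge0.
have step : forall k, vnorm (H1 *m x k.+1) <=
    vnorm (H1 *m x k) + `|t| * C1 * (vnorm (H1 *m x k) + 2 * nu) + 2 * rho * h * nu.
  move=> k; rewrite /x iterS -/(x k).
  set y := x k.
  rewrite (@comm_decomp H1 (cjP P (Lrow lam)) U (Rem P lam t) ('i%C * t%:C%C) y) //.
  have b1 : vnorm (U *m (H1 *m y)) = vnorm (H1 *m y).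
    by rewrite (cjP_vnorm HP1 HP2) // => j; apply: eR_unit.
  have b2 : vnorm (H1 *m (Rem P lam t *m y)) <= h * (rho * nu).
    apply: le_trans (Hh _) _; rewrite ler_wpM2l // -(nk k).
    exact: (Rem_bound HP1 HP2).
  have b3 : vnorm (Rem P lam t *m (H1 *m y)) <= rho * (h * nu).
    apply: le_trans (Rem_bound HP1 HP2 _ tsmall) _; rewrite ler_wpM2l //.
    by rewrite -(nk k); apply: Hh.
  have b4 : vnorm (('i%C * t%:C%C) *: (mxcomm H1 (cjP P (Lrow lam)) *m y)) <=
            `|t| * (C1 * (vnorm (H1 *m y) + nu + nu)).
    rewrite vnormZ.
    have -> : cn2 ('i%C * t%:C%C) = t ^+ 2 by rewrite /cn2 /=; ring.
    rewrite sqrtr_sqr ler_wpM2l //; apply: le_trans (HT y) _.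
    rewrite ler_wpM2l // -(nk k) lerD2r; exact: part1.
  have t1 := vnormD (U *m (H1 *m y) + (H1 *m (Rem P lam t *m y) - Rem P lam t *m (H1 *m y)))
     (('i%C * t%:C%C) *: (mxcomm H1 (cjP P (Lrow lam)) *m y)).
  have t2 := vnormD (U *m (H1 *m y)) (H1 *m (Rem P lam t *m y) - Rem P lam t *m (H1 *m y)).
  have t3 := vnormB (H1 *m (Rem P lam t *m y)) (Rem P lam t *m (H1 *m y)).
  have ht0 : 0 <= `|t| by [].
  lra.
have G := @gronwall R (fun k => vnorm (H1 *m x k)) (`|t| * C1) (2 * rho * h * nu) nu N.
have := G (mulr_ge0 (normr_ge0 t) C10) _ nu0 (vnorm_ge0 _) tN step.
rewrite /x iterU xiE /= => H.
have E0 : 0 <= 2 * rho * h * nu by rewrite mulr_ge0 // mulr_ge0 // mulr_ge0.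
apply: le_trans (H E0) _.
have -> : 2 * (N%:R * (2 * rho * h * nu)) = 8 * (xi ^+ 2 * L) * h * nu / N%:R.
  by rewrite /rho -xiE; field; rewrite gt_eqF.
rewrite /a0; lra.
Qed.

End Main.

Section Fin.
Local Open Scope classical_set_scope.
Variable R : realType.
Local Notation C := R[i].
Variable n : nat.

Lemma vnorm0 : vnorm (0 : 'cV[C]_n) = 0.
Proof.
rewrite vnormE /nsq big1 ?sqrtr0 // => j _; rewrite mxE /cn2 /=.
by rewrite expr0n /= addr0.
Qed.

Lemma opnorm_ge0 (A : 'M[C]_n) : 0 <= opnorm A.
Proof.
rewrite /opnorm; set S := [set _ | _ in _].
have S0 : S 0.
  by exists 0; rewrite /= ?vnorm0 ?ler01 // mulmx0 vnorm0.
have [hs|nhs] := pselect (has_sup S).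
  exact: sup_upper_bound hs _ S0.
by rewrite sup_out.
Qed.

Lemma expi_norm (A : 'M[C]_n) x y : hermmx A -> vnorm (expi x A *m y) = vnorm y.
Proof.
move=> hA; have [P [lam [HP1 HP2 E]]] := herm_spec hA.
have -> : A = cjP P (Lrow lam) by rewrite E.
by rewrite (expi_cjP HP1 HP2) (cjP_vnorm HP1 HP2) // => j; apply: eR_unit.
Qed.

Lemma expi_comm (A : 'M[C]_n) x : hermmx A -> A *m expi x A = expi x A *m A.
Proof.
move=> hA; have [P [lam [HP1 HP2 E]]] := herm_spec hA.
have -> : A = cjP P (Lrow lam) by rewrite E.
by rewrite (expi_cjP HP1 HP2) (U_comm HP2).
Qed.

Lemma prod_bound m (H1 H2 : 'M[C]_n) (D1 : 'M[C]_(m, n)) (C1 h : R)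
    (l : nat -> bool) (xi : nat -> R) (K : nat) :
  hermmx H1 -> hermmx H2 -> H1 = adjmx D1 *m D1 -> 0 <= C1 ->
  (forall v, vnorm (mxcomm H1 H2 *m v) <= C1 * (vnorm (D1 *m v) + vnorm v)) ->
  (forall k, (k < K)%N -> C1 * `|h * xi k| <= 2^-1) ->
  forall (v : 'cV[C]_n) (s : seq nat), all (fun k => (k < K)%N) s ->
  let w := foldr (fun k acc => expi (h * xi k) (if l k then H1 else H2) *m acc)
                 1%:M s *m v in
  vnorm w = vnorm v /\ vnorm (H1 *m w) + vnorm w <= 3%:R ^+ (size s) * (vnorm (H1 *m v) + vnorm v).
Proof.
move=> hH1 hH2 ED C10 HT Hxi v; elim=> [|k s IH] /=.
  by rewrite mul1mx expr0 mul1r; split.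
move=> /andP[hk hs]; have [IH1 IH2] := IH hs.
rewrite -mulmxA; set x := foldr _ _ s *m v in IH1 IH2 *.
have g0 : 0 <= vnorm (H1 *m x) + vnorm x by rewrite addr_ge0 ?vnorm_ge0.
case: (l k).
- rewrite !expi_norm //; split => //.
  rewrite mulmxA expi_comm // -mulmxA expi_norm // exprS -mulrA.
  apply: le_trans IH2 _; rewrite ler_peMl // ?mulr_ge0 ?exprn_ge0 ?addr_ge0 ?vnorm_ge0 //.
  by rewrite ler1n.
- rewrite !expi_norm //; split => //.
  have := part2 hH1 hH2 ED C10 HT (Hxi k hk) x.
  rewrite exprS -mulrA => H.
  have : vnorm (H1 *m (expi (h * xi k) H2 *m x)) + vnorm x <= 3 * (vnorm (H1 *m x) + vnorm x).
    have := vnorm_ge0 x; have := vnorm_ge0 (H1 *m x); lra.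
  move=> H'; apply: le_trans H' _; rewrite ler_wpM2l //.
Qed.

End Fin.

Lemma zid2 (V : zmodType) (p1 p2 p3 p4 : V) :
  p1 - p2 - (p3 - p4) = p4 - p3 - (p2 - p1).
Proof. by rewrite !opprB addrC. Qed.

Lemma fin_arith (R : realType) (x y W : R) : 0 <= x -> 0 <= y -> x + y <= W ->
  0 <= W -> 3 * x + 6 * y <= 10 * W.
Proof. move=> *; lra. Qed.

Theorem lemma7 (R : realType) (n : nat) (H2 : 'M[R[i]]_n) (C1 C2 : R) :
  hermmx H2 -> 0 <= C1 -> 0 <= C2 ->
  (forall (m : nat) (H1 : 'M[R[i]]_n) (D1 : 'M[R[i]]_(m, n)),
     hermmx H1 -> H1 = adjmx D1 *m D1 ->
     (forall v : 'cV[R[i]]_n,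
        vnorm (mxcomm H1 H2 *m v) <= C1 * (vnorm (D1 *m v) + vnorm v)) ->
     (forall v : 'cV[R[i]]_n,
        vnorm (mxcomm H1 (mxcomm H1 H2) *m v) <= C2 * (vnorm (H1 *m v) + vnorm v)) ->
     (* (1) *)
     (forall v : 'cV[R[i]]_n, vnorm (D1 *m v) <= vnorm (H1 *m v) + vnorm v) /\
     (* (2) *)
     (forall (xi : R), (C1 + opnorm H2) * `|xi| <= 2^-1 ->
        forall v : 'cV[R[i]]_n,
          vnorm (H1 *m (expi xi H2 *m v)) <= 2 * (vnorm (H1 *m v) + vnorm v))) /\
  (* (3) *)
  (forall (K : nat) (h : R) (l : nat -> bool) (xi : nat -> R),
     (1 <= K)%N -> 0 < h ->
     (forall k, (k < K)%N -> (C1 + opnorm H2) * `|xi k| * h <= 2^-1) ->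
     exists Ct : R, 0 < Ct /\
       forall (m : nat) (H1 : 'M[R[i]]_n) (D1 : 'M[R[i]]_(m, n)),
         hermmx H1 -> H1 = adjmx D1 *m D1 ->
         (forall v : 'cV[R[i]]_n,
            vnorm (mxcomm H1 H2 *m v) <= C1 * (vnorm (D1 *m v) + vnorm v)) ->
         (forall v : 'cV[R[i]]_n,
            vnorm (mxcomm H1 (mxcomm H1 H2) *m v) <= C2 * (vnorm (H1 *m v) + vnorm v)) ->
         forall v : 'cV[R[i]]_n,
           let w := mxprod (fun k => expi (h * xi k) (if l k then H1 else H2)) K *m v in
           [/\ vnorm (H1 *m w) <= Ct * (vnorm (H1 *m v) + vnorm v),
               vnorm (H2 *m w) <= Ct * vnorm v,
               vnorm (mxcomm H1 H2 *m w)
                 <= Ct * (Num.sqrt (vnorm v * vnorm (H1 *m v)) + vnorm v),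
               vnorm (mxcomm H1 (mxcomm H1 H2) *m w) <= Ct * (vnorm (H1 *m v) + vnorm v)
             & vnorm (mxcomm H2 (mxcomm H2 H1) *m w) <= Ct * (vnorm (H1 *m v) + vnorm v)]).
Proof.
move=> hH2 C10 C20.
have opn0 : 0 <= opnorm H2 := opnorm_ge0 H2.
have [h2 [h20 Hh2]] := herm_bound hH2.
split.
  move=> m H1 D1 hH1 ED HT HT2; split; first by move=> v; exact: part1.
  move=> xi Hxi v; apply: (part2 hH1 hH2 ED C10 HT) => //.
  apply: le_trans Hxi; rewrite ler_wpM2r //; lra.
move=> K h l xi HK hpos Hxi.
set G : R := 3%:R ^+ K.
have G1 : 1 <= G by rewrite /G exprn_ege1 // ler1n.
set Q : R := 1 + C1 + C2 + h2.
have Q1 : 1 <= Q by rewrite /Q; lra.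
exists (10 * Q ^+ 2 * (G + 1)); split.
  by rewrite !mulr_gt0 // ?exprn_gt0 //; lra.
move=> m H1 D1 hH1 ED HT HT2 v w.
have Hx : forall k, (k < K)%N -> C1 * `|h * xi k| <= 2^-1.
  move=> k hk; apply: le_trans (Hxi k hk); rewrite normrM (gtr0_norm hpos).
  have -> : (C1 + opnorm H2) * `|xi k| * h = C1 * (h * `|xi k|) + opnorm H2 * `|xi k| * h by ring.
  by rewrite lerDl mulr_ge0 // ?mulr_ge0 // ltW.
have hs : all (fun k => (k < K)%N) (iota 0 K).
  by apply/allP => k; rewrite mem_iota add0n.
have [wn Hw] := prod_bound l hH1 hH2 ED C10 HT Hx v hs.
rewrite size_iota -/G in Hw.
rewrite -/w in wn Hw; rewrite wn in Hw.
set nu := vnorm v in Hw *; set a := vnorm (H1 *m v) in Hw *.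
set aw := vnorm (H1 *m w) in Hw *.
have nu0 : 0 <= nu := vnorm_ge0 v.
have a0 : 0 <= a := vnorm_ge0 _.
have aw0 : 0 <= aw := vnorm_ge0 _.
set Ct := 10 * Q ^+ 2 * (G + 1).
have Q2 : Q <= Q ^+ 2 by rewrite expr2 ler_peMl //; lra.
have h2Q : h2 <= Q by rewrite /Q; lra.
have C1Q : C1 <= Q by rewrite /Q; lra.
have C2Q : C2 <= Q by rewrite /Q; lra.
have G0 : 0 <= G by lra.
have QCt : Q * (G + 1) <= Ct.
  rewrite /Ct ler_wpM2r //; first lra.
  lra.
have Y1 : aw + nu <= (G + 1) * (a + nu) by lra.
have G1Ct : G + 1 <= Ct by apply: le_trans QCt; rewrite ler_peMl //; lra.
have T_bd : forall y, vnorm (mxcomm H1 H2 *m y) <= C1 * (vnorm (H1 *m y) + 2 * vnorm y).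
  move=> y; apply: le_trans (HT y) _; rewrite ler_wpM2l //.
  have := part1 y ED; lra.
have H2_bd : forall y, vnorm (H2 *m y) <= h2 * vnorm y by [].
split.
-
  apply: le_trans (_ : (G + 1) * (a + nu) <= _); first lra.
  by rewrite ler_wpM2r //; lra.
-
  apply: le_trans (Hh2 w) _; rewrite wn ler_wpM2r //.
  apply: le_trans h2Q _; apply: le_trans QCt; rewrite ler_peMr //; lra.
-
  set sq := Num.sqrt (nu * a).
  have sq0 : 0 <= sq := sqrtr_ge0 _.
  have sq2 : sq ^+ 2 = nu * a by rewrite sqr_sqrtr // mulr_ge0.
  set d := vnorm (D1 *m w).
  have d0 : 0 <= d := vnorm_ge0 _.
  have hd : d ^+ 2 <= nu * aw by have := CS_D D1 w; rewrite -ED wn.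
  have e1 : d ^+ 2 <= G * (sq ^+ 2 + nu ^+ 2).
    apply: le_trans hd _; rewrite sq2.
    have : nu * aw <= nu * (G * (a + nu)) by rewrite ler_wpM2l //; lra.
    move=> hh; apply: le_trans hh _; rewrite expr2; lra.
  have e2 : G * (sq ^+ 2 + nu ^+ 2) <= (G * (sq + nu)) ^+ 2.
    have s1 : sq ^+ 2 + nu ^+ 2 <= (sq + nu) ^+ 2.
      by rewrite sqrrD; have := mulr_ge0 sq0 nu0; lra.
    have s2 : G <= G ^+ 2 by rewrite expr2 ler_peMl.
    rewrite exprMn; apply: le_trans (_ : G ^+ 2 * (sq ^+ 2 + nu ^+ 2) <= _).
      by rewrite ler_wpM2r // addr_ge0 // sqr_ge0.
    by rewrite ler_wpM2l // sqr_ge0.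
  have dle : d <= G * (sq + nu).
    by rewrite -(@ler_pXn2r _ 2) ?nnegrE ?mulr_ge0 ?addr_ge0 //; apply: le_trans e1 e2.
  apply: le_trans (HT w) _; rewrite wn -/d.
  have : C1 * (d + nu) <= C1 * ((G + 1) * (sq + nu)) by rewrite ler_wpM2l //; lra.
  move=> hh; apply: le_trans hh _; rewrite mulrA ler_wpM2r ?addr_ge0 //.
  apply: le_trans QCt; rewrite ler_wpM2r //; lra.
-
  apply: le_trans (HT2 w) _; rewrite wn.
  have : C2 * (aw + nu) <= C2 * ((G + 1) * (a + nu)) by rewrite ler_wpM2l.
  move=> hh; apply: le_trans hh _; rewrite mulrA ler_wpM2r ?addr_ge0 //.
  apply: le_trans QCt; rewrite ler_wpM2r //; lra.
-
  have EV : mxcomm H2 (mxcomm H2 H1) *m w =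
            mxcomm H1 H2 *m (H2 *m w) - H2 *m (mxcomm H1 H2 *m w).
    rewrite /mxcomm !(mulmxBr, mulmxBl) !mulmxA; exact: zid2.
  rewrite EV.
  have z_bd : vnorm (H2 *m w) <= h2 * nu by have := Hh2 w; rewrite wn.
  have Tw : vnorm (mxcomm H1 H2 *m w) <= C1 * (aw + 2 * nu) by have := T_bd w; rewrite wn.
  have H1z : vnorm (H1 *m (H2 *m w)) <= h2 * aw + C1 * (aw + 2 * nu).
    have -> : H1 *m (H2 *m w) = H2 *m (H1 *m w) + mxcomm H1 H2 *m w.
      by rewrite /mxcomm mulmxBl !mulmxA addrC subrK.
    apply: le_trans (vnormD _ _) _; apply: lerD => //.
  have b1 : vnorm (mxcomm H1 H2 *m (H2 *m w)) <=
            C1 * (h2 * aw + C1 * (aw + 2 * nu) + 2 * (h2 * nu)).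
    apply: le_trans (T_bd _) _; rewrite ler_wpM2l //; lra.
  have b2 : vnorm (H2 *m (mxcomm H1 H2 *m w)) <= h2 * (C1 * (aw + 2 * nu)).
    by apply: le_trans (Hh2 _) _; rewrite ler_wpM2l.
  apply: le_trans (vnormB _ _) _.
  set P1 := C1 * h2; set P2 := C1 * C1.
  have P1Q : P1 <= Q ^+ 2 by rewrite /P1 expr2; apply: ler_pM.
  have P2Q : P2 <= Q ^+ 2 by rewrite /P2 expr2; apply: ler_pM.
  have P10 : 0 <= P1 by rewrite mulr_ge0.
  have P20 : 0 <= P2 by rewrite mulr_ge0.
  have E : C1 * (h2 * aw + C1 * (aw + 2 * nu) + 2 * (h2 * nu)) + h2 * (C1 * (aw + 2 * nu))
           = P1 * (2 * aw + 4 * nu) + P2 * (aw + 2 * nu) by rewrite /P1 /P2; ring.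
  have f1 : P1 * (2 * aw + 4 * nu) <= Q ^+ 2 * (2 * aw + 4 * nu) by rewrite ler_wpM2r // addr_ge0 // mulr_ge0.
  have f2 : P2 * (aw + 2 * nu) <= Q ^+ 2 * (aw + 2 * nu) by rewrite ler_wpM2r // addr_ge0 // mulr_ge0.
  have Q20 : 0 <= Q ^+ 2 by rewrite sqr_ge0.
  have f3 : Q ^+ 2 * (aw + nu) <= Q ^+ 2 * ((G + 1) * (a + nu)) by rewrite ler_wpM2l.
  apply: le_trans (lerD b1 b2) _; rewrite E.
  apply: le_trans (lerD f1 f2) _.
  have -> : Q ^+ 2 * (2 * aw + 4 * nu) + Q ^+ 2 * (aw + 2 * nu) =
            3 * (Q ^+ 2 * aw) + 6 * (Q ^+ 2 * nu) by ring.
  rewrite mulrDr in f3.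
  have W0 : 0 <= Q ^+ 2 * ((G + 1) * (a + nu)).
    by apply: mulr_ge0 => //; apply: mulr_ge0; [exact: addr_ge0 G0 ler01 | exact: addr_ge0 a0 nu0].
  have -> : Ct * (a + nu) = 10 * (Q ^+ 2 * ((G + 1) * (a + nu))) by rewrite /Ct; ring.
  exact: (@fin_arith R _ _ _ (mulr_ge0 Q20 aw0) (mulr_ge0 Q20 nu0) f3 W0).
Qed.
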